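(* Let $\varrho=\mathrm{Tr}_B|\psi\rangle\langle\psi|$ have eigenvalues $p_1,\dots,p_d$ and eigenbasis $\{|i\rangle\}$, and let $V_\Lambda=\sum_i\lambda_i|i\rangle\langle i|$. Then $$\sqrt{F^\Lambda_\psi}=\max_{U\ \text{unitary}}\Big|\mathrm{Tr}[UV_\Lambda U^\dagger\varrho]\Big|=\max_{U}\Big|\sum_{i}\lambda_i\sum_j p_j|u_{ij}|^2\Big|,\quad u_{ij}=\langle i|U|j\rangle,$$ and the maximum over $U$ is attained at a permutation matrix. Consequently $\sqrt{F^\Lambda_\psi}=\max_{\sigma\in S_d}\big|\sum_{i=1}^d\lambda_i\,p_{\sigma(i)}\big|$, and there is a maximizing $W\in\mathcal{W}_\Lambda$ that is diagonal in the eigenbasis of $\varrho$, so that $[W,\varrho]=0$.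
   Context: Let $d=d_A\le d_B$ and let $|\psi\rangle\in\mathbb{C}^{d_A}\otimes\mathbb{C}^{d_B}$ be a unit vector. A spectrum is a multiset $\Lambda=\{\lambda_1,\dots,\lambda_d\}$ of unimodular complex numbers $\lambda_j=e^{i\theta_j}$. Let $\mathcal{W}_\Lambda$ be the set of unitary $d\times d$ matrices acting on $\mathbb{C}^{d_A}$ whose eigenvalues, counted with multiplicity, are exactly $\Lambda$. Define $F^\Lambda_\psi=\max_{W\in\mathcal{W}_\Lambda}|\langle\psi|(W\otimes \mathbb{1}_B)|\psi\rangle|^2$. $S_d$ denotes the symmetric group on $\{1,\dots,d\}$. *)

(* Defs.v *)
From HB Require Import structures.
From mathcomp Require Import all_boot all_order all_algebra all_fingroup.
From mathcomp Require Import spectral.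
Set Implicit Arguments. Unset Strict Implicit. Unset Printing Implicit Defensive.
Import Order.TTheory GRing.Theory Num.Theory.
Local Open Scope ring_scope.

(* A state |psi> in C^dA (x) C^dB is given by its coefficient matrix
   psi a b = <a,b|psi> in the product basis |a>|b>. *)

(* <psi| (W (x) 1_B) |psi> : the matrix of W (x) 1_B has entries
   <a,b|W (x) 1|a',b'> = W a a' * delta_{b b'}. *)
Definition expect (C : numClosedFieldType) (dA dB : nat)
  (psi : 'M[C]_(dA, dB)) (W : 'M[C]_dA) : C :=
  \sum_(a < dA) \sum_(a' < dA) \sum_(b < dB)
     (psi a b)^* * W a a' * psi a' b.

Definition sqnorm (C : numClosedFieldType) (dA dB : nat) (psi : 'M[C]_(dA, dB)) : C :=
  \sum_(a < dA) \sum_(b < dB) `|psi a b| ^+ 2.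

(* Reduced state rho = Tr_B |psi><psi|, rho a a' = sum_b psi a b conj(psi a' b). *)
Definition rhoA (C : numClosedFieldType) (dA dB : nat) (psi : 'M[C]_(dA, dB)) : 'M[C]_dA :=
  \matrix_(a < dA, a' < dA) \sum_(b < dB) psi a b * (psi a' b)^*.

Definition adj (C : numClosedFieldType) (m n : nat) (M : 'M[C]_(m, n)) : 'M[C]_(n, m) :=
  (map_mx Num.conj M)^T.

(* W_Lambda: unitary matrices whose eigenvalues, with multiplicity, are lam. *)
Definition WLam (C : numClosedFieldType) (d : nat) (lam : 'rV[C]_d) (W : 'M[C]_d) : Prop :=
  W \is unitarymx /\ char_poly W = \prod_(i < d) ('X - (lam 0 i)%:P).

Definition unitary (C : numClosedFieldType) (d : nat) (U : 'M[C]_d) : Prop :=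
  U \is unitarymx.

Definition is_max (T : Type) (C : numClosedFieldType) (P : T -> Prop) (f : T -> C) (m : C) : Prop :=
  (exists x, P x /\ f x = m) /\ (forall x, P x -> f x <= m).

(* Main.v *)
Require Import Defs.
From HB Require Import structures.
From mathcomp Require Import all_boot all_order all_algebra all_fingroup.
From mathcomp Require Import spectral.
From mathcomp Require Import ring.
Set Implicit Arguments. Unset Strict Implicit. Unset Printing Implicit Defensive.
Import Order.TTheory GRing.Theory Num.Theory.
Local Open Scope ring_scope.

Section Aux.
Variable C : numClosedFieldType.

Lemma pot_le (A P : nat -> C) (d : nat) :
 (forall n m, (n <= m)%N -> (m < d)%N -> A n <= A m) ->
 (forall n m, (n <= m)%N -> (m < d)%N -> P n <= P m) ->
 forall i k, (i < d)%N -> (k < d)%N ->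
 A i * (P k - P i) <= (\sum_(0 <= m < k) A m * (P m.+1 - P m))
                      - \sum_(0 <= m < i) A m * (P m.+1 - P m).
Proof.
move=> hA hP i k hi hk.
case: (leqP i k) => hik.
- rewrite (big_cat_nat (n:=i) (p:=k)) /= ?hik // addrAC subrr add0r.
  rewrite -telescope_sumr // mulr_sumr; apply: ler_sum_nat => m /andP [h1 h2].
  apply: ler_wpM2r.
    by rewrite subr_ge0; apply: hP => //; apply: leq_ltn_trans hk.
  by apply: hA => //; apply: ltn_trans hk.
- rewrite (big_cat_nat (n:=k) (p:=i)) /= ?(ltnW hik) // opprD addrA subrr add0r.
  rewrite lerNr -mulrN opprB.
  rewrite -telescope_sumr ?(ltnW hik) // mulr_sumr; apply: ler_sum_nat => m /andP [h1 h2].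
  rewrite mulrC [X in _ <= X]mulrC.
  apply: ler_wpM2l.
    by rewrite subr_ge0; apply: hP => //; apply: leq_ltn_trans hi.
  by apply: hA => //; apply: ltnW.
Qed.


Lemma ds_sorted d (A P : 'I_d -> C) (B : 'M[C]_d) :
 (forall i j : 'I_d, (i <= j)%N -> A i <= A j) ->
 (forall i j : 'I_d, (i <= j)%N -> P i <= P j) ->
 (forall i j, 0 <= B i j) -> (forall i, \sum_j B i j = 1) -> (forall j, \sum_i B i j = 1) ->
 \sum_i A i * (\sum_j B i j * P j) <= \sum_i A i * P i.
Proof.
case: d A P B => [|d] A P B hA hP hB hr hc; first by rewrite !big_ord0.
pose An n := A (inord n); pose Pn n := P (inord n).
pose v k := \sum_(0 <= m < k) An m * (Pn m.+1 - Pn m).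
have hAn : forall n m, (n <= m)%N -> (m < d.+1)%N -> An n <= An m.
  move=> n m hnm hm; apply: hA; rewrite !inordK //; exact: leq_ltn_trans hm.
have hPn : forall n m, (n <= m)%N -> (m < d.+1)%N -> Pn n <= Pn m.
  move=> n m hnm hm; apply: hP; rewrite !inordK //; exact: leq_ltn_trans hm.
have key : forall i j : 'I_d.+1, A i * P j <= (A i * P i - v i) + v j.
  move=> i j; have := pot_le hAn hPn (ltn_ord i) (ltn_ord j).
  rewrite /An /Pn !inord_val -/(v i) -/(v j) mulrBr => h.
  rewrite -subr_ge0 (_ : _ - _ = (v j - v i) - (A i * P j - A i * P i)); first by rewrite subr_ge0.
  ring.
apply: (@le_trans _ _ (\sum_i \sum_j B i j * ((A i * P i - v i) + v j))).
  apply: ler_sum => i _; rewrite mulr_sumr; apply: ler_sum => j _.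
  by rewrite mulrCA; apply: ler_wpM2l.
rewrite le_eqVlt; apply/orP; left; apply/eqP.
under eq_bigr do (under eq_bigr do rewrite mulrDr; rewrite big_split).
rewrite big_split /= [X in _ + X]exchange_big /=.
have -> : \sum_(i < d.+1) \sum_(j < d.+1) B i j * (A i * P i - v i) = \sum_(i < d.+1) (A i * P i - v i).
  by apply: eq_bigr => i _; rewrite -mulr_suml hr mul1r.
have -> : \sum_(j < d.+1) \sum_(i < d.+1) B i j * v j = \sum_(j < d.+1) v j.
  by apply: eq_bigr => j _; rewrite -mulr_suml hc mul1r.
by rewrite sumrB addrNK.
Qed.


Lemma sort_perm d (a : 'I_d -> C) : (forall i, a i \is Num.real) ->
  exists al : 'S_d, forall i j : 'I_d, (i <= j)%N -> a (al i) <= a (al j).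
Proof.
move=> ha; pose leT := fun i j : 'I_d => a i <= a j.
have tot : total leT by move=> i j; exact: real_leVge.
have tr : transitive leT by move=> j i k; apply: le_trans.
pose t := ord_tuple d; pose s := sort_tuple leT t.
have : perm_eq s t by rewrite /s /= perm_sort.
move/tuple_permP => [al hal]; exists al => i j hij.
have e : forall k, al k = tnth s k.
  by move=> k; rewrite (val_inj hal) tnth_map !tnth_ord_tuple.
have so : sorted leT s by exact: sort_sorted.
rewrite !e !(tnth_nth i).
apply: (sorted_leq_nth tr _ i so) => //; first by move=> x; exact: lexx.
  by rewrite inE size_tuple.
by rewrite inE size_tuple.
Qed.


Lemma ds_gen d (a p : 'I_d -> C) (B : 'M[C]_d) :
 (forall i, a i \is Num.real) -> (forall i, p i \is Num.real) ->
 (forall i j, 0 <= B i j) -> (forall i, \sum_j B i j = 1) -> (forall j, \sum_i B i j = 1) ->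
 exists s : 'S_d, \sum_i a i * (\sum_j B i j * p j) <= \sum_i a i * p (s i).
Proof.
move=> ha hp hB hr hc.
have [al hal] := sort_perm ha; have [be hbe] := sort_perm hp.
pose B' := \matrix_(n, m) B (al n) (be m).
have := @ds_sorted d (fun n => a (al n)) (fun n => p (be n)) B' hal hbe.
have hB' : forall i j, 0 <= B' i j by move=> i j; rewrite mxE.
have hr' : forall i, \sum_j B' i j = 1.
  move=> i; under eq_bigr do rewrite mxE.
  by rewrite -(hr (al i)); apply/esym/reindex_inj/perm_inj.
have hc' : forall j, \sum_i B' i j = 1.
  move=> j; under eq_bigr do rewrite mxE.
  by rewrite -(hc (be j)); apply/esym/reindex_inj/perm_inj.
move=> /(_ hB' hr' hc') h; exists (al^-1 * be)%g.
rewrite (reindex_inj (@perm_inj _ al)) [X in _ <= X](reindex_inj (@perm_inj _ al)) /=.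
set L := (X in X <= _); set R := (X in _ <= X).
have -> : L = \sum_i a (al i) * (\sum_j B' i j * p (be j)).
  apply: eq_bigr => i _; congr (_ * _).
  under [RHS]eq_bigr do rewrite mxE.
  by rewrite (reindex_inj (@perm_inj _ be)).
have -> : R = \sum_i a (al i) * p (be i).
  by apply: eq_bigr => i _; rewrite permM permK.
exact: h.
Qed.


Lemma ds_complex d (lam p : 'I_d -> C) (B : 'M[C]_d) :
 (forall i, p i \is Num.real) ->
 (forall i j, 0 <= B i j) -> (forall i, \sum_j B i j = 1) -> (forall j, \sum_i B i j = 1) ->
 exists s : 'S_d, `|\sum_i lam i * (\sum_j B i j * p j)| <= `|\sum_i lam i * p (s i)|.
Proof.
move=> hp hB hr hc.
set T := \sum_i _.
have [T0|Tn0] := eqVneq T 0.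
  by exists 1%g; rewrite T0 normr0 normr_ge0.
pose z := T^* / `|T|.
pose a i := 'Re (z * lam i).
have rq : forall i, \sum_j B i j * p j \is Num.real.
  by move=> i; apply: rpred_sum => j _; apply: rpredM => //; apply: ger0_real.
have [s hs] := @ds_gen d a p B (fun i => Creal_Re _) hp hB hr hc.
exists s.
have nT : `|T| != 0 by rewrite normr_eq0.
have e1 : `|T| = \sum_i a i * (\sum_j B i j * p j).
  transitivity ('Re (z * T)).
    have -> : z * T = `|T|.
      by rewrite /z mulrAC -normCKC expr2 mulfK.
    by apply/esym/Creal_ReP; apply: normr_real.
  rewrite /T mulr_sumr raddf_sum; apply: eq_bigr => i _.
  by rewrite mulrA; apply: (ReMr (rq i)).
rewrite e1; apply: le_trans hs _.
have e2 : \sum_i a i * p (s i) = 'Re (z * \sum_i lam i * p (s i)).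
  rewrite mulr_sumr raddf_sum; apply: eq_bigr => i _.
  by rewrite mulrA; apply/esym; apply: (ReMr (hp (s i))).
rewrite e2; apply: le_trans (leif_Re_Creal _).1 _.
rewrite normrM -[X in _ <= X]mul1r ler_wpM2r //.
by rewrite /z normrM normfV norm_conjC normr_id mulfV.
Qed.

Lemma ex_max (T : finType) (f : T -> C) (x0 : T) :
  (forall x, f x \is Num.real) -> exists x, forall y, f y <= f x.
Proof.
move=> hf.
suff [x hx] : exists x, forall y, y \in x0 :: enum T -> f y <= f x.
  by exists x => y; apply: hx; rewrite inE mem_enum orbT.
elim: (enum T) => [|a s [x hx]].
  by exists x0 => y; rewrite inE => /eqP ->.
have hs : forall y, y \in s -> f y <= f x.
  by move=> y ys; apply: hx; rewrite in_cons ys orbT.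
have h0 : f x0 <= f x by apply: hx; exact: mem_head.
case/orP: (real_leVge (hf a) (hf x)) => h.
  by exists x => y; rewrite !in_cons => /or3P [/eqP->|/eqP->|/hs].
exists a => y; rewrite !in_cons => /or3P [/eqP->|/eqP->|/hs ys] //.
  exact: le_trans h.
exact: le_trans h.
Qed.

Local Open Scope sesquilinear_scope.

Lemma unitary_rows d (W : 'M[C]_d) : W \is unitarymx ->
  forall i, \sum_j `|W i j| ^+ 2 = 1.
Proof.
move=> /unitarymxP hW i.
have := congr1 (fun M : 'M[C]_d => M i i) hW; rewrite !mxE eqxx mulr1n => <-.
by apply: eq_bigr => j _; rewrite !mxE normCK.
Qed.

Lemma unitary_cols d (W : 'M[C]_d) : W \is unitarymx ->
  forall j, \sum_i `|W i j| ^+ 2 = 1.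
Proof.
move=> /unitarymxP /mulmx1C hW j.
have := congr1 (fun M : 'M[C]_d => M j j) hW; rewrite !mxE eqxx mulr1n => <-.
by apply: eq_bigr => i _; rewrite !mxE normCKC.
Qed.

Lemma char_poly_uconj d (P D : 'M[C]_d) : P \is unitarymx ->
  char_poly (P^t* *m D *m P) = char_poly D.
Proof.
move=> /unitarymxP /mulmx1C hP.
rewrite /char_poly /char_poly_mx !map_mxM.
set R' := map_mx _ (P^t*); set P' := map_mx _ P; set D' := map_mx _ D.
have hRP : R' *m P' = 1%:M by rewrite -map_mxM hP map_mx1.
have -> : 'X%:M - R' *m D' *m P' = R' *m ('X%:M - D') *m P'.
  by rewrite mulmxBr mulmxBl scalar_mxC -!mulmxA hRP mulmx1.
rewrite !det_mulmx mulrAC -det_mulmx hRP det1 mul1r.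
by [].
Qed.

Lemma tr_core d (Y : 'M[C]_d) (lam p : 'rV[C]_d) :
  \tr (Y *m diag_mx lam *m Y^t* *m diag_mx p) =
  \sum_i lam 0 i * \sum_j `|Y j i| ^+ 2 * p 0 j.
Proof.
rewrite /mxtrace; under eq_bigr do rewrite mul_mx_diag mxE !mxE.
under eq_bigr do rewrite mulr_suml.
rewrite exchange_big /=; apply: eq_bigr => i _; rewrite mulr_sumr; apply: eq_bigr => j _.
rewrite mul_mx_diag !mxE normCK; ring.
Qed.


Lemma charpoly_perm d (mu lam : 'rV[C]_d) :
  \prod_(i < d) ('X - (mu 0 i)%:P) = \prod_(i < d) ('X - (lam 0 i)%:P) ->
  exists pi : 'S_d, forall i, mu 0 i = lam 0 (pi i).
Proof.
move=> h.
pose tm := [tuple mu 0 i | i < d]; pose tl := [tuple lam 0 i | i < d].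
have : perm_eq tm tl.
  apply: prod_XsubC_eq; rewrite /tm /tl /= !big_map.
  exact: h.
move/tuple_permP => [pi hpi]; exists pi => i.
have := congr1 (fun s : seq C => nth 0 s i) hpi.
by rewrite -!tnth_nth !tnth_mktuple.
Qed.


Lemma sum_perm_col d (s : 'S_d) (p : 'I_d -> C) i :
  \sum_j `|(perm_mx s : 'M[C]_d) j i| ^+ 2 * p j = p (s^-1 i)%g.
Proof.
rewrite (bigD1 (s^-1 i)%g) //= big1 ?addr0.
  by rewrite /perm_mx !mxE permKV eqxx normr1 expr1n mul1r.
move=> j hj; rewrite /perm_mx !mxE.
case: eqP => [e|]; last by rewrite normr0 expr0n mul0r.
by move: hj; rewrite -e permK eqxx.
Qed.

Lemma sum_perm_row d (s : 'S_d) (p : 'I_d -> C) i :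
  \sum_j p j * `|(perm_mx s : 'M[C]_d) i j| ^+ 2 = p (s i).
Proof.
rewrite (bigD1 (s i)) //= big1 ?addr0.
  by rewrite /perm_mx !mxE eqxx normr1 expr1n mulr1.
by move=> j hj; rewrite /perm_mx !mxE eq_sym (negbTE hj) /= mulr0n normr0 expr0n mulr0.
Qed.

Lemma diag_unitary d (mu : 'rV[C]_d) : (forall i, `|mu 0 i| = 1) ->
  diag_mx mu \is unitarymx.
Proof.
move=> hmu; apply/unitarymxP; apply/matrixP => i j.
rewrite mul_diag_mx !mxE.
case: (eqVneq i j) => [->|hij].
  by rewrite mulr1n -normCK hmu expr1n.
by rewrite mulr0n conjC0 mulr0.
Qed.


Lemma ds_unit d (X : 'M[C]_d) : X \is unitarymx ->
  let B := (\matrix_(i, j) `|X i j| ^+ 2 : 'M[C]_d) in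
  [/\ forall i j, 0 <= B i j, forall i, \sum_j B i j = 1 & forall j, \sum_i B i j = 1].
Proof.
move=> hX B; split.
- by move=> i j; rewrite mxE exprn_ge0.
- by move=> i; under eq_bigr do rewrite mxE; exact: unitary_rows.
- by move=> j; under eq_bigr do rewrite mxE; exact: unitary_cols.
Qed.

Lemma mxCt_ge0 m n (X : 'M[C]_(m, n)) i : 0 <= (X *m X^t*) i i.
Proof. by rewrite mxE; apply: sumr_ge0 => b _; rewrite !mxE; exact: mul_conjC_ge0. Qed.

End Aux.

Theorem lemma1 (C : numClosedFieldType) (dA dB : nat) (hd : (dA <= dB)%N)
  (psi : 'M[C]_(dA, dB)) (lam p : 'rV[C]_dA) (Q : 'M[C]_dA) :
  sqnorm psi = 1 ->
  (forall i, `|lam 0 i| = 1) ->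
  unitary Q ->
  rhoA psi = Q *m diag_mx p *m adj Q ->
  let V := Q *m diag_mx lam *m adj Q in
  let g := fun U : 'M[C]_dA => `|\tr (U *m V *m adj U *m rhoA psi)| in
  let h := fun U : 'M[C]_dA =>
    `|\sum_(i < dA) lam 0 i * \sum_(j < dA) p 0 j * `|(adj Q *m U *m Q) i j| ^+ 2| in
  exists m : C, 0 <= m /\
    (* F^Lambda_psi = m^2, i.e. sqrt F^Lambda_psi = m *)
    is_max (WLam lam) (fun W => `|expect psi W| ^+ 2) (m ^+ 2) /\
    is_max (@unitary C dA) g m /\
    is_max (@unitary C dA) h m /\
    (* maxima attained at permutation matrices (in the eigenbasis of rho) *)
    (exists s : 'S_dA, g (Q *m perm_mx s *m adj Q) = m) /\
    (exists s : 'S_dA, h (Q *m perm_mx s *m adj Q) = m) /\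
    is_max (fun _ : 'S_dA => True)
      (fun s => `|\sum_(i < dA) lam 0 i * p 0 (s i)|) m /\
    (exists W, WLam lam W /\ is_diag_mx (adj Q *m W *m Q) /\
       `|expect psi W| ^+ 2 = m ^+ 2 /\ W *m rhoA psi = rhoA psi *m W).
Proof.
move=> hnorm hlam hQu hrho V g h.
have adjE : forall m n (M : 'M[C]_(m, n)), adj M = (M ^t* )%sesqui.
  by move=> m n M; rewrite /adj map_trmx.
Local Open Scope sesquilinear_scope.
rewrite /unitary in hQu.
have hQ1 : Q *m Q^t* = 1%:M := unitarymxP hQu.
have hQ2 : Q^t* *m Q = 1%:M := mulmx1C hQ1.
rewrite adjE in hrho.
have rhoE : rhoA psi = psi *m psi^t*.
  by apply/matrixP => a a'; rewrite !mxE; apply: eq_bigr => b _; rewrite !mxE.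
have hp : forall j, 0 <= p 0 j.
  move=> j; have e : diag_mx p = Q^t* *m rhoA psi *m Q.
    by rewrite hrho !mulmxA hQ2 mul1mx -mulmxA hQ2 mulmx1.
  have := congr1 (fun M : 'M[C]_dA => M j j) e; rewrite /= mxE eqxx mulr1n => ->.
  have -> : Q^t* *m rhoA psi *m Q = (Q^t* *m psi) *m (Q^t* *m psi)^t*.
    by rewrite rhoE trmx_mul map_mxM trmxCK !mulmxA.
  exact: mxCt_ge0.
have hpr : forall j, p 0 j \is Num.real := fun j => ger0_real (hp j).
pose f := fun s : 'S_dA => `|\sum_(i < dA) lam 0 i * p 0 (s i)|.
have [s0 hs0] := @ex_max _ _ f 1%g (fun s => normr_real _).
have bnd : forall (mu : 'rV[C]_dA) (pi : 'S_dA), (forall i, mu 0 i = lam 0 (pi i)) ->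
    forall B : 'M[C]_dA, (forall i j, 0 <= B i j) -> (forall i, \sum_j B i j = 1) ->
    (forall j, \sum_i B i j = 1) ->
    `|\sum_i mu 0 i * \sum_j B i j * p 0 j| <= f s0.
  move=> mu pi hmu B hB hr hc.
  have [s hs] := @ds_complex _ dA (fun i => mu 0 i) (fun j => p 0 j) B hpr hB hr hc.
  apply: le_trans hs _; apply: le_trans (hs0 (pi^-1 * s)%g).
  rewrite /f (reindex_inj (@perm_inj _ pi^-1)) /=.
  rewrite le_eqVlt; apply/orP; left; apply/eqP; congr `|_|.
  by apply: eq_bigr => i _; rewrite hmu permKV permM.
have bndg : forall (mu : 'rV[C]_dA) (pi : 'S_dA), (forall i, mu 0 i = lam 0 (pi i)) ->
    forall X : 'M[C]_dA, X \is unitarymx ->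
    `|\sum_i mu 0 i * \sum_j `|X j i| ^+ 2 * p 0 j| <= f s0.
  move=> mu pi hmu X hX.
  have hXT : X^T \is unitarymx by rewrite trmx_unitary.
  have [hB hr hc] := ds_unit hXT.
  have := bnd mu pi hmu _ hB hr hc.
  by under eq_bigr do under eq_bigr do rewrite !mxE.
have bndh : forall X : 'M[C]_dA, X \is unitarymx ->
    `|\sum_i lam 0 i * \sum_j p 0 j * `|X i j| ^+ 2| <= f s0.
  move=> X hX.
  have [hB hr hc] := ds_unit hX.
  have h1 : forall i, lam 0 i = lam 0 ((1%g : 'S_dA) i) by move=> i; rewrite perm1.
  have := bnd lam 1%g h1 _ hB hr hc.
  by under eq_bigr do under eq_bigr do rewrite !mxE mulrC.
have gE : forall U : 'M[C]_dA, g U =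
    `|\sum_i lam 0 i * \sum_j `|(Q^t* *m U *m Q) j i| ^+ 2 * p 0 j|.
  move=> U; rewrite -tr_core /g /V hrho !adjE; congr `|_|.
  rewrite !trmx_mul !map_mxM !trmxCK !mulmxA mxtrace_mulC.
  by rewrite !mulmxA.
have hE : forall U : 'M[C]_dA, h U =
    `|\sum_i lam 0 i * \sum_j p 0 j * `|(Q^t* *m U *m Q) i j| ^+ 2|.
  by move=> U; rewrite /h adjE.
have expectE : forall W, expect psi W = \tr (W *m rhoA psi).
  move=> W; rewrite /expect /mxtrace; apply: eq_bigr => a _; rewrite mxE.
  apply: eq_bigr => a' _; rewrite mxE mulr_sumr; apply: eq_bigr => b _; ring.
have simpQ : forall M, Q^t* *m (Q *m M *m Q^t* ) *m Q = M.
  by move=> M; rewrite !mulmxA hQ2 mul1mx -mulmxA hQ2 mulmx1.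
have QU : forall U, U \is unitarymx -> Q^t* *m U *m Q \is unitarymx.
  by move=> U hU; rewrite !mul_unitarymx // trmxC_unitary.
have hperm : forall s : 'S_dA, (perm_mx s : 'M[C]_dA) \is unitarymx.
  move=> s; apply/unitarymxP; rewrite tr_perm_mx.
  have -> : map_mx (@Num.conj C) (perm_mx s^-1) = (perm_mx s^-1 : 'M[C]_dA).
    by apply/matrixP => i j; rewrite mxE /perm_mx !mxE rmorph_nat.
  by rewrite -perm_mxM mulgV perm_mx1.
have Qperm : forall s : 'S_dA, Q *m perm_mx s *m adj Q \is unitarymx.
  by move=> s; rewrite adjE !mul_unitarymx ?trmxC_unitary.
have gperm : g (Q *m perm_mx (s0^-1)%g *m adj Q) = f s0.
  rewrite gE adjE simpQ /f; congr `|_|; apply: eq_bigr => i _.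
  by rewrite sum_perm_col invgK.
have hperm' : h (Q *m perm_mx s0 *m adj Q) = f s0.
  rewrite hE adjE simpQ /f; congr `|_|; apply: eq_bigr => i _.
  by rewrite sum_perm_row.
pose mu0 : 'rV[C]_dA := \row_j lam 0 ((s0^-1)%g j).
pose W0 := Q *m diag_mx mu0 *m adj Q.
have hW0u : W0 \is unitarymx.
  rewrite /W0 adjE !mul_unitarymx ?trmxC_unitary // diag_unitary // => i.
  by rewrite mxE hlam.
have hW0c : char_poly W0 = \prod_(i < dA) ('X - (lam 0 i)%:P).
  rewrite /W0 adjE -{1}(trmxCK Q) char_poly_uconj ?trmxC_unitary //.
  rewrite char_poly_trig ?diag_mx_is_trig //.
  under eq_bigr do rewrite mxE eqxx mulr1n mxE.
  rewrite [RHS](reindex_inj (@perm_inj _ s0^-1)) /=.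
  by [].
have hW0d : is_diag_mx (adj Q *m W0 *m Q).
  by rewrite /W0 !adjE simpQ diag_mx_is_diag.
have hW0t : \tr (W0 *m rhoA psi) = \sum_i lam 0 i * p 0 (s0 i).
  rewrite /W0 hrho adjE !mulmxA -(mulmxA (Q *m diag_mx mu0)) hQ2 mulmx1.
  rewrite mxtrace_mulC !mulmxA hQ2 mul1mx mulmx_diag mxtrace_diag.
  rewrite (reindex_inj (@perm_inj _ s0)) /=.
  by apply: eq_bigr => i _; rewrite !mxE permK.
have hW0r : W0 *m rhoA psi = rhoA psi *m W0.
  rewrite /W0 hrho adjE !mulmxA -(mulmxA (Q *m diag_mx mu0)) hQ2 mulmx1.
  rewrite -(mulmxA (Q *m diag_mx p)) hQ2 mulmx1.
  by rewrite -(mulmxA Q (diag_mx mu0)) diag_mxC mulmxA.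
have Fbnd : forall W, WLam lam W -> `|\tr (W *m rhoA psi)| <= f s0.
  move=> W [hWu hWc].
  have nW : W \is normalmx.
    by apply/normalmxP; rewrite (unitarymxP hWu) (mulmx1C (unitarymxP hWu)).
  have /orthomx_spectralP eW := nW.
  have hP0 := spectral_unitarymx W.
  rewrite invmx_unitary // in eW.
  have hc := hWc; rewrite eW char_poly_uconj // char_poly_trig ?diag_mx_is_trig // in hc.
  have hc' : \prod_(i < dA) ('X - ((spectral_diag W) 0 i)%:P) =
             \prod_(i < dA) ('X - (lam 0 i)%:P).
    by rewrite -hc; apply: eq_bigr => i _; rewrite mxE eqxx mulr1n.
  have [pi hpi] := charpoly_perm hc'.
  have -> : \tr (W *m rhoA psi) =
    \tr ((Q^t* *m (spectralmx W)^t* ) *m diag_mx (spectral_diag W) *m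
         (Q^t* *m (spectralmx W)^t* )^t* *m diag_mx p).
    by rewrite {1}eW hrho !trmx_mul !map_mxM !trmxCK !mulmxA mxtrace_mulC !mulmxA.
  rewrite tr_core; apply: (bndg _ pi hpi).
  by rewrite !mul_unitarymx ?trmxC_unitary.
have h1 : forall i, lam 0 i = lam 0 ((1%g : 'S_dA) i) by move=> i; rewrite perm1.
exists (f s0); split; first exact: normr_ge0.
split.
  split; first by exists W0; split; [by split | by rewrite expectE hW0t].
  move=> W hW; rewrite expectE; have hb := Fbnd W hW.
  by rewrite expr2 [X in _ <= X]expr2; apply: ler_pM.
split.
  split; first by exists (Q *m perm_mx (s0^-1)%g *m adj Q); split; [exact: Qperm | exact: gperm].
  by move=> U hU; rewrite gE; apply: (bndg lam 1%g h1); apply: QU.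
split.
  split; first by exists (Q *m perm_mx s0 *m adj Q); split; [exact: Qperm | exact: hperm'].
  by move=> U hU; rewrite hE; apply: bndh; apply: QU.
split; first by exists (s0^-1)%g.
split; first by exists s0.
split; first by split; [exists s0 | move=> s _; exact: hs0].
exists W0; split; first by split.
split; first done.
by split; [rewrite expectE hW0t | done].
Qed.
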